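(* Let $n\ge 1$, let $x^*\in\{0,1\}^n$, and let $\mathcal{D}$ be a finite nonempty background dataset of pairs $(x,y)$ with $x\in\{0,1\}^n$. Fix $f\in\{0,1\}^n$ and let $\Psi_f(x)=(-1)^{\langle f,x\rangle}$. Then for every $i\in[n]$, the SHAP value of $\Psi_f$ at $x^*$ with respect to $\mathcal{D}$ is $$\phi_i^{\Psi_f} \;=\; -\frac{2f_i}{|\mathcal{D}|}\sum_{(x,y)\in\mathcal{D}} \mathbb{1}_{x_i\neq x^*_i}\,(-1)^{\langle f,x\rangle}\,\frac{(|A|+1)\bmod 2}{|A|+1},$$ where $A=A(x)\triangleq\{j\in[n]\;:\; x_j\neq x^*_j,\ j\neq i,\ f_j=1\}$.
   Context: $[n]=\{1,\dots,n\}$ is the set of features and $\langle f,x\rangle=\sum_j f_jx_j$. For $S\subseteq[n]$ and $x,x^*\in\{0,1\}^n$, $x^*_S\oplus x_{[n]\setminus S}$ (also written $(x^*_S,x_{[n]\setminus S})$) denotes the vector $z\in\{0,1\}^n$ with $z_j=x^*_j$ for $j\in S$ and $z_j=x_j$ for $j\notin S$. For a function $h:\{0,1\}^n\to\mathbb{R}$, the value function is $v_h(S)=\frac{1}{|\mathcal{D}|}\sum_{(x,y)\in\mathcal{D}} h(x^*_S\oplus x_{[n]\setminus S})$ (sum over the dataset counted with multiplicity), and the SHAP value of feature $i$ is $\phi_i^h=\sum_{S\subseteq[n]\setminus\{i\}}\frac{|S|!\,(n-|S|-1)!}{n!}\bigl(v_h(S\cup\{i\})-v_h(S)\bigr)$.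 $\mathbb{1}_{x_i\neq x^*_i}$ is $1$ if $x_i\neq x^*_i$ and $0$ otherwise. *)

(* Defs.v *)
From HB Require Import structures.
From mathcomp Require Import all_boot all_order all_algebra.
Set Implicit Arguments. Unset Strict Implicit. Unset Printing Implicit Defensive.
Import Order.TTheory GRing.Theory Num.Theory.
Local Open Scope ring_scope.

Notation bvec n := {ffun 'I_n -> bool}.

Definition ip n (f x : bvec n) : nat := (\sum_(j < n) (f j && x j : nat))%N.

Definition mix n (xs : bvec n) (S : {set 'I_n}) (x : bvec n) : bvec n :=
  [ffun j => if j \in S then xs j else x j].

Definition vfun (R : fieldType) n (Y : Type) (h : bvec n -> R) (xs : bvec n)
    (D : seq (bvec n * Y)) (S : {set 'I_n}) : R :=
  (size D)%:R^-1 * \sum_(p <- D) h (mix xs S p.1).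

Definition shap (R : fieldType) n (Y : Type) (h : bvec n -> R) (xs : bvec n)
    (D : seq (bvec n * Y)) (i : 'I_n) : R :=
  \sum_(S : {set 'I_n} | i \notin S)
     ((#|S|`! * (n - #|S| - 1)`!)%:R / (n`!)%:R) *
     (vfun h xs D (i |: S) - vfun h xs D S).

Definition Psi (R : fieldType) n (f : bvec n) (x : bvec n) : R := (-1) ^+ ip f x.

Definition Aset n (f xs x : bvec n) (i : 'I_n) : {set 'I_n} :=
  [set j | (x j != xs j) && (j != i) && f j].

(* Main.v *)
Require Import Defs.
From HB Require Import structures.
From mathcomp Require Import all_boot all_order all_algebra.
From mathcomp Require Import zify ring lra.
Import Order.TTheory GRing.Theory Num.Theory.
Local Open Scope ring_scope.

Section Comb.
Variable R : realFieldType.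

Definition W (m s : nat) : R := (s`! * (m - s)`!)%:R / ((m.+1)`!)%:R.

Lemma Wrec m s : (s <= m)%N -> W m.+1 s + W m.+1 s.+1 = W m s.
Proof.
move=> H; rewrite /W -(subnKC H).
set d := (m - s)%N; clear H.
have e : ((s+d).+1 - s = d.+1)%N by lia.
rewrite e subSS addKn !factS !natrM.
have h1 : ((s + d).+1)`!%:R != 0 :> R by rewrite pnatr_eq0 -lt0n fact_gt0.
have h2 : (s + d).+2%:R != 0 :> R by rewrite pnatr_eq0.
rewrite -[(s+d).+2]addn2 -[d.+1]addn1 -[s.+1]addn1 -[(s+d).+1]addn1 !natrD.
have p1 : 0 < (s+d)`!%:R :> R by rewrite ltr0n fact_gt0.
have hs : 0 <= s%:R :> R by rewrite ler0n.
have hd : 0 <= d%:R :> R by rewrite ler0n.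
field.
rewrite lt0r_neq0 // lt0r_neq0 ?lt0r_neq0 //; lra.
Qed.

Lemma binsum (b : nat) (g : nat -> R) :
  \sum_(l < b.+2) 'C(b.+1, l)%:R * g l =
  \sum_(l < b.+1) 'C(b, l)%:R * (g l + g l.+1).
Proof.
rewrite big_ord_recl /= bin0.
under eq_bigr => l _ do rewrite /bump /= binS natrD mulrDl.
rewrite big_split /=.
under [in RHS]eq_bigr => l _ do rewrite mulrDr.
rewrite big_split /= [in RHS]big_ord_recl /= bin0 -addrA; congr (_ + _).
congr (_ + _).
  rewrite big_ord_recr /= bin_small // mul0r addr0.
  by apply: eq_bigr => l _.
Qed.

Lemma hlem a b k : (k <= a)%N ->
  \sum_(l < b.+1) 'C(b, l)%:R * W (a + b) (k + l) = W a k.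
Proof.
move=> ka; elim: b => [|b IH].
  by rewrite big_ord1 bin0 mul1r !addn0.
rewrite (binsum b (fun l => W (a + b.+1) (k + l))) -IH; apply: eq_bigr => l _.
rewrite !addnS Wrec //.
have := ltn_ord l; lia.
Qed.

Lemma altsum m : \sum_(k < m) (-1) ^+ k = (m %% 2)%:R :> R.
Proof.
elim: m => [|m IH]; first by rewrite big_ord0 mod0n.
rewrite big_ord_recr /= IH !modn2 -signr_odd /=.
by case: (odd m) => /=; rewrite ?expr0 ?expr1 ?add0r ?subrr.
Qed.

Lemma alt a : \sum_(k < a.+1) 'C(a, k)%:R * (-1) ^+ k * W a k =
  (a.+1 %% 2)%:R / a.+1%:R.
Proof.
rewrite -altsum mulr_suml; apply: eq_bigr => k _.
have ka : (k <= a)%N by have := ltn_ord k; lia.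
rewrite /W factS natrM -(bin_fact ka) !natrM.
have p1 : 'C(a, k)%:R != 0 :> R by rewrite pnatr_eq0 -lt0n bin_gt0.
have p2 : k`!%:R != 0 :> R by rewrite pnatr_eq0 -lt0n fact_gt0.
have p3 : (a - k)`!%:R != 0 :> R by rewrite pnatr_eq0 -lt0n fact_gt0.
have p4 : a.+1%:R != 0 :> R by rewrite pnatr_eq0.
by field; rewrite addrC natr1 p1 p2 p3 p4.
Qed.

Lemma sum_card (T : finType) (A : {set T}) (G : nat -> R) :
  \sum_(S : {set T} | S \subset A) G #|S| = \sum_(k < #|A|.+1) 'C(#|A|, k)%:R * G k.
Proof.
transitivity (\sum_(S : {set T} | S \subset A) \sum_(k < #|A|.+1) (#|S| == k)%:R * G k).
  apply: eq_bigr => S SA.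
  have lt : (#|S| < #|A|.+1)%N by rewrite ltnS subset_leq_card.
  rewrite (bigD1 (Ordinal lt)) //= eqxx mul1r big1 ?addr0 // => k kne.
  have -> : (#|S| == k) = false.
    apply/negbTE; apply: contra kne => /eqP e.
    by apply/eqP; apply: val_inj => /=.
  by rewrite mul0r.
rewrite exchange_big /=; apply: eq_bigr => k _.
rewrite -mulr_suml -cards_draws; congr (_ * _).
rewrite -natr_sum; congr (_ %:R).
rewrite -(@sum1_card _ (mem [set S0 : {set T} | (S0 \subset A) && (#|S0| == k)])).
rewrite big_mkcond [in RHS]big_mkcond /=; apply: eq_bigr => S _.
by rewrite inE; case: (S \subset A); case: (#|S| == k).
Qed.

Lemma key_split (T : finType) (A B S1 S2 : {set T}) : [disjoint A & B] ->
  S1 \subset A -> S2 \subset B ->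
  (S1 :|: S2) :&: A = S1 /\ (S1 :|: S2) :&: B = S2.
Proof.
move=> dAB sA sB.
have dx : forall x, x \in A -> x \in B -> False.
  move=> x xA xB; have := disjoint_setI0 dAB.
  by move/setP/(_ x); rewrite !inE xA xB.
split; apply/setP => x; rewrite !inE;
  move: (subsetP sA x) (subsetP sB x) (dx x);
  case: (x \in S1); case: (x \in S2); case: (x \in A); case: (x \in B) => //=;
  idtac.
all: move=> h1 h2 h3; first [by move: (h1 isT) | by move: (h2 isT) | by case: (h3 isT isT)].
Qed.

Lemma sum_split (T : finType) (A B : {set T}) (F : nat -> nat -> R) :
  [disjoint A & B] ->
  \sum_(S : {set T} | S \subset A :|: B) F #|S :&: A| #|S :&: B| =
  \sum_(S1 : {set T} | S1 \subset A) \sum_(S2 : {set T} | S2 \subset B) F #|S1| #|S2|.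
Proof.
move=> dAB; rewrite pair_big /=.
rewrite (reindex_onto (fun p : {set T} * {set T} => p.1 :|: p.2)
                      (fun S => (S :&: A, S :&: B))) /=; last first.
  by move=> S SAB; rewrite -setIUr; apply/setIidPl.
apply: eq_big => [[S1 S2]|[S1 S2]] /=.
  apply/andP/andP => [[_ /eqP [<- <-]]|[sA sB]].
    by rewrite !subsetIr.
  have [-> ->] := @key_split _ A B S1 S2 dAB sA sB.
  by split; [apply: setUSS | ].
move=> /andP[_ /eqP [-> ->]].
done.
Qed.

Lemma setU_compl (T : finType) (i : T) (A : {set T}) :
  i \notin A -> A :|: ([set~ i] :\: A) = [set~ i].
Proof.
move=> iA; apply/setP => x; rewrite !inE.
case xA: (x \in A) => //=; apply/esym/eqP => e; move: iA; rewrite -e xA.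
done.
Qed.

Lemma comb (n : nat) (i : 'I_n) (A : {set 'I_n}) : (0 < n)%N -> i \notin A ->
  \sum_(S : {set 'I_n} | i \notin S)
     ((#|S|`! * (n - #|S| - 1)`!)%:R / (n`!)%:R) * (-1) ^+ #|S :&: A| =
  ((#|A| + 1) %% 2)%:R / (#|A| + 1)%:R :> R.
Proof.
move=> n0 iA.
set U := [set~ i]; set B := U :\: A.
have dAB : [disjoint A & B].
  rewrite disjoint_subset; apply/subsetP => x xA; rewrite !inE xA /=.
  done.
have AU : A \subset U.
  apply/subsetP => x xA; rewrite !inE; apply: contra iA => /eqP <-; done.
have UAB : A :|: B = U by apply: setU_compl.
have cU : #|U| = n.-1 by rewrite cardsC1 card_ord.
have cAB : (#|A| + #|B| = n.-1)%N.
  by rewrite -cU -(cardsID A U) (setIidPr AU).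
set a := #|A| in cAB *; set b := #|B| in cAB.
have hn : n = (a + b).+1 by lia.
pose F (k l : nat) : R := W (a + b) (k + l) * (-1) ^+ k.
transitivity (\sum_(S : {set 'I_n} | S \subset A :|: B) F #|S :&: A| #|S :&: B|).
  apply: eq_big => [S|S iS].
    rewrite UAB; apply/idP/idP => [iS|SU].
      by apply/subsetP => x xS; rewrite !inE; apply: contraNneq iS => <-.
    by apply/negP => iS; have := subsetP SU i iS; rewrite !inE eqxx.
  have SU : S \subset U.
    by apply/subsetP => x xS; rewrite !inE; apply: contraNneq iS => <-.
  have cS : #|S| = (#|S :&: A| + #|S :&: B|)%N.
    have e : S :\: A = S :&: B.
      apply/setP => x; rewrite !inE.
      have := subsetP SU x; rewrite !inE.
      by case xS: (x \in S); rewrite ?andbF //= => ->.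
    by rewrite -(cardsID A S) e.
  rewrite /F /W cS -hn; congr (_ / _ * _).
  by congr ((_ * _`!)%:R); lia.
rewrite sum_split //.
under eq_bigr => S1 _ do rewrite (sum_card _ B (fun l => F #|S1| l)).
rewrite (sum_card _ A (fun k => \sum_(l < #|B|.+1) 'C(#|B|, l)%:R * F k l)).
rewrite -/a -/b addn1 -alt; apply: eq_bigr => k _.
rewrite -mulrA; congr (_ * _).
rewrite /F.
under eq_bigr => l _ do rewrite mulrA.
rewrite -mulr_suml hlem 1?mulrC //.
by have := ltn_ord k; lia.
Qed.

Definition Cset {n} (f xs x : bvec n) : {set 'I_n} := [set j | f j && (x j != xs j)].

Lemma card_sumb (n : nat) (E : {set 'I_n}) : #|E| = (\sum_(j < n) (j \in E : nat))%N.
Proof.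
rewrite -sum1_card big_mkcond /=; apply: eq_bigr => j _.
by case: (j \in E).
Qed.

Lemma psi_mix n (f xs x : bvec n) (T : {set 'I_n}) :
  Psi R f (mix xs T x) = Psi R f x * (-1) ^+ #|T :&: Cset f xs x|.
Proof.
rewrite /Psi /ip card_sumb !expr_sum -big_split /=; apply: eq_bigr => j _.
rewrite /mix ffunE !inE.
case: (j \in T); case: (f j); case: (x j); case: (xs j) => /=;
  rewrite ?expr0 ?expr1 ?mulNr ?mulr1 ?mul1r ?opprK //.
Qed.

Lemma psi_diff n (f xs x : bvec n) (i : 'I_n) (S : {set 'I_n}) : i \notin S ->
  Psi R f (mix xs (i |: S) x) - Psi R f (mix xs S x) =
  - (2 * f i)%N%:R * (x i != xs i)%:R * Psi R f x * (-1) ^+ #|S :&: Aset f xs x i|.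
Proof.
move=> iS; rewrite !psi_mix.
have e1 : S :&: Cset f xs x = S :&: Aset f xs x i.
  apply/setP => j; rewrite !inE.
  case jS: (j \in S) => //=.
  have ji : j != i by apply: contraNneq iS => <-.
  by rewrite ji andbT andbC.
case ci: (f i && (x i != xs i)).
  have e2 : (i |: S) :&: Cset f xs x = i |: (S :&: Cset f xs x).
    apply/setP => j; rewrite !inE.
    case: eqP => [->|] //=; by rewrite ci.
  rewrite e2 cardsU1 e1 !inE (negbTE iS) /= exprS.
  move/andP: ci => [-> ->] /=.
  by rewrite muln1 mulr1 -mulrN1; ring.
have e2 : (i |: S) :&: Cset f xs x = S :&: Cset f xs x.
  apply/setP => j; rewrite !inE.
  case: eqP => [->|] //=; by rewrite ci (negbTE iS).
rewrite e2 subrr.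
move: ci; case: (f i); case: (x i != xs i) => //= _;
  by rewrite ?muln0 ?mulr0n ?mulr0 ?mul0r ?oppr0 ?mul0r ?mulr0.
Qed.
End Comb.

Theorem lemma1 (R : realFieldType) (n : nat) (Y : Type) (xs : bvec n)
    (D : seq (bvec n * Y)) (f : bvec n) (i : 'I_n) :
  (0 < n)%N -> (0 < size D)%N ->
  shap (Psi R f) xs D i =
    - ((2 * f i)%N%:R / (size D)%:R) *
      \sum_(p <- D)
        ((p.1 i != xs i)%:R * Psi R f p.1 *
         (((#|Aset f xs p.1 i| + 1) %% 2)%:R / (#|Aset f xs p.1 i| + 1)%:R)).
Proof.
move=> n0 D0.
rewrite /shap /vfun.
transitivity (\sum_(S : {set 'I_n} | i \notin S)
   \sum_(p <- D) (size D)%:R^-1 * (- (2 * f i)%N%:R * (p.1 i != xs i)%:R * Psi R f p.1) *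
     (((#|S|`! * (n - #|S| - 1)`!)%:R / (n`!)%:R) * (-1) ^+ #|S :&: Aset f xs p.1 i|)).
  apply: eq_bigr => S iS.
  rewrite -mulrBr -sumrB mulr_sumr mulr_sumr; apply: eq_bigr => p _.
  rewrite psi_diff //; ring.
rewrite exchange_big /= mulr_sumr; apply: eq_bigr => p _.
rewrite -mulr_sumr comb //; last by rewrite !inE eqxx andbF.
ring.
Qed.
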